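(* Let $\Pi$ be the elliptic curve $u^2=s(s^2+s+7)$, let $$t=\frac12-\frac{(s^9-84s^6-378s^5-1512s^4-5208s^3-7236s^2-8127s-784)\,u}{432\,s(s+1)^2(s^2+s+7)^2},$$ and $$y=\frac12-\frac{(s^{10}+5s^9+24s^8+20s^7-266s^6-2874s^5-14812s^4-40316s^3-85359s^2-100067s-67396)\,u}{16(s+1)(s^2+s+7)(5s^6+63s^5+252s^4+854s^3+1449s^2+1827s+2030)}.$$ Then $y(t)$ is a solution of $\mathrm{P}_{\mathrm{VI}}$ with parameters $(\theta_1,\theta_2,\theta_3,\theta_4)=(4/7,4/7,4/7,1/3)$.
   Context: $\mathrm{P}_{\mathrm{VI}}$ is the equation $$\frac{d^2y}{dt^2}=\frac12\Big(\frac1y+\frac1{y-1}+\frac1{y-t}\Big)\Big(\frac{dy}{dt}\Big)^2-\Big(\frac1t+\frac1{t-1}+\frac1{y-t}\Big)\frac{dy}{dt}+\frac{y(y-1)(y-t)}{t^2(t-1)^2}\Big(\alpha+\beta\frac{t}{y^2}+\gamma\frac{t-1}{(y-1)^2}+\delta\frac{t(t-1)}{(y-t)^2}\Big),$$ with $\alpha=(\theta_4-1)^2/2$, $\beta=-\theta_1^2/2$, $\gamma=\theta_3^2/2$, $\delta=(1-\theta_2^2)/2$. When $y,t$ are given as rational functions of a parameter on a curve, derivatives with respect to $t$ are computed via the chain rule. *)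

(* Defs.v *)
From mathcomp Require Import all_boot all_order all_algebra.
Set Implicit Arguments. Unset Strict Implicit. Unset Printing Implicit Defensive.
Import Order.TTheory GRing.Theory Num.Theory.
Local Open Scope ring_scope.

Definition is_derivation (R : fieldType) (D : R -> R) : Prop :=
  (forall a b : R, D (a + b) = D a + D b) /\
  (forall a b : R, D (a * b) = D a * b + a * D b).

Definition PVI_alpha (R : fieldType) (th4 : R) : R := (th4 - 1) ^+ 2 / 2%:R.
Definition PVI_beta (R : fieldType) (th1 : R) : R := - (th1 ^+ 2) / 2%:R.
Definition PVI_gamma (R : fieldType) (th3 : R) : R := th3 ^+ 2 / 2%:R.
Definition PVI_delta (R : fieldType) (th2 : R) : R := (1 - th2 ^+ 2) / 2%:R.

Definition PVI_rhs (R : fieldType) (th1 th2 th3 th4 : R) (t y y1 : R) : R :=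
  (1 / 2%:R) * (1 / y + 1 / (y - 1) + 1 / (y - t)) * y1 ^+ 2
  - (1 / t + 1 / (t - 1) + 1 / (y - t)) * y1
  + y * (y - 1) * (y - t) / (t ^+ 2 * (t - 1) ^+ 2) *
    (PVI_alpha th4 + PVI_beta th1 * t / y ^+ 2
     + PVI_gamma th3 * (t - 1) / (y - 1) ^+ 2
     + PVI_delta th2 * t * (t - 1) / (y - t) ^+ 2).

(* "y(t) solves P_VI" in a differential field (K, D): derivatives with
   respect to t are computed by the chain rule d/dt = (1 / D t) D. *)
Definition solves_PVI (R : fieldType) (D : R -> R) (th1 th2 th3 th4 : R)
  (t y : R) : Prop :=
  let y1 := D y / D t in
  let y2 := D y1 / D t in
  y2 = PVI_rhs th1 th2 th3 th4 t y y1.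

Definition t_of (R : fieldType) (s u : R) : R :=
  1 / 2%:R -
  (s ^+ 9 - 84%:R * s ^+ 6 - 378%:R * s ^+ 5 - 1512%:R * s ^+ 4
   - 5208%:R * s ^+ 3 - 7236%:R * s ^+ 2 - 8127%:R * s - 784%:R) * u
  / (432%:R * s * (s + 1) ^+ 2 * (s ^+ 2 + s + 7%:R) ^+ 2).

Definition t_den (R : fieldType) (s : R) : R :=
  432%:R * s * (s + 1) ^+ 2 * (s ^+ 2 + s + 7%:R) ^+ 2.

Definition y_of (R : fieldType) (s u : R) : R :=
  1 / 2%:R -
  (s ^+ 10 + 5%:R * s ^+ 9 + 24%:R * s ^+ 8 + 20%:R * s ^+ 7
   - 266%:R * s ^+ 6 - 2874%:R * s ^+ 5 - 14812%:R * s ^+ 4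
   - 40316%:R * s ^+ 3 - 85359%:R * s ^+ 2 - 100067%:R * s - 67396%:R) * u
  / (16%:R * (s + 1) * (s ^+ 2 + s + 7%:R) *
     (5%:R * s ^+ 6 + 63%:R * s ^+ 5 + 252%:R * s ^+ 4 + 854%:R * s ^+ 3
      + 1449%:R * s ^+ 2 + 1827%:R * s + 2030%:R)).

Definition y_den (R : fieldType) (s : R) : R :=
  16%:R * (s + 1) * (s ^+ 2 + s + 7%:R) *
  (5%:R * s ^+ 6 + 63%:R * s ^+ 5 + 252%:R * s ^+ 4 + 854%:R * s ^+ 3
   + 1449%:R * s ^+ 2 + 1827%:R * s + 2030%:R).

(* Main.v *)
Require Import Defs.
From mathcomp Require Import all_boot all_order all_algebra.
From mathcomp Require Import ring.
Import GRing.Theory.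
Local Open Scope ring_scope.
Set Warnings "-abstract-large-number".
Set Implicit Arguments. Unset Strict Implicit. Unset Printing Implicit Defensive.

Section Deriv.
Variables (R : fieldType) (D : R -> R).
Hypothesis hD : is_derivation D.

Lemma Dadd a b : D (a + b) = D a + D b. Proof. exact: hD.1. Qed.
Lemma DM a b : D (a * b) = D a * b + a * D b. Proof. exact: hD.2. Qed.
Lemma D0 : D 0 = 0.
Proof. have h := Dadd 0 0; rewrite addr0 in h.
by apply: (addrI (D 0)); rewrite addr0 -h. Qed.
Lemma DN a : D (- a) = - D a.
Proof. have h := Dadd a (- a); rewrite subrr D0 in h.
by apply/eqP; rewrite -addr_eq0 addrC -h. Qed.
Lemma DB a b : D (a - b) = D a - D b. Proof. by rewrite Dadd DN. Qed.
Lemma D1 : D 1 = 0.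
Proof. have h := DM 1 1; rewrite !mulr1 !mul1r in h.
by apply: (addrI (D 1)); rewrite addr0 -h. Qed.
Lemma Dnat n : D n%:R = 0.
Proof. elim: n => [|n IH]; first by rewrite D0. by rewrite mulrS Dadd D1 IH addr0. Qed.
Lemma DXS a n : D (a ^+ n.+1) = n.+1%:R * a ^+ n * D a.
Proof.
elim: n => [|n IH]; first by rewrite expr1 expr0 mulr1 mul1r.
rewrite [a ^+ n.+2]exprS DM IH -[n.+2]addn1 natrD exprS; move: (a ^+ n) (n.+1%:R) => x m; ring.
Qed.
Lemma DV a : a != 0 -> D (a ^-1) = - D a / a ^+ 2.
Proof.
move=> ha; have h := DM a a^-1; rewrite mulfV // D1 in h.
have : D a^-1 = (a * D a^-1) / a by field.
rewrite (_ : a * D a^-1 = - (D a * a^-1)); last by apply/eqP; rewrite -addr_eq0 addrC -h.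
move=> ->; by field.
Qed.
Lemma Ddiv a b : b != 0 -> D (a / b) = (D a * b - a * D b) / b ^+ 2.
Proof. move=> hb; rewrite DM DV //; by field. Qed.
End Deriv.


Definition coef (R : fieldType) (p : bool * nat) : R := if p.1 then - p.2%:R else p.2%:R.
Fixpoint hp (R : fieldType) (cs : seq (bool * nat)) (s : R) : R :=
  if cs is c :: cs' then coef R c + s * hp cs' s else 0.
Fixpoint dhp (R : fieldType) (cs : seq (bool * nat)) (s : R) : R :=
  if cs is c :: cs' then hp cs' s + s * dhp cs' s else 0.
Lemma Dhp (R : fieldType) (D : R -> R) (hD : is_derivation D) (s : R) cs :
  D (hp cs s) = dhp cs s * D s.
Proof.
elim: cs => [|c cs IH] /=; first by rewrite (D0 hD) mul0r.
have hc : D (coef R c) = 0 by rewrite /coef; case: c.1; rewrite ?(DN hD) (Dnat hD) ?oppr0.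
rewrite (Dadd hD) (DM hD) IH hc; ring.
Qed.

Definition f0 (R : fieldType) (s : R) : R := s.
Definition g0 (R : fieldType) (s : R) : R := 1.
Definition f1 (R : fieldType) (s : R) : R := (s + 1).
Definition g1 (R : fieldType) (s : R) : R := 1.
Definition f2 (R : fieldType) (s : R) : R := (s ^+ 2 + s + 7%:R).
Definition g2 (R : fieldType) (s : R) : R := (1%:R + 2%:R * s).
Definition f3 (R : fieldType) (s : R) : R := (5%:R * s ^+ 6 + 63%:R * s ^+ 5 + 252%:R * s ^+ 4 + 854%:R * s ^+ 3 + 1449%:R * s ^+ 2 + 1827%:R * s + 2030%:R).
Definition g3 (R : fieldType) (s : R) : R := (1827%:R + 2898%:R * s + 2562%:R * s ^+ 2 + 1008%:R * s ^+ 3 + 315%:R * s ^+ 4 + 30%:R * s ^+ 5).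
Definition f4 (R : fieldType) (s : R) : R := (- 1%:R + s).
Definition g4 (R : fieldType) (s : R) : R := 1.
Definition f5 (R : fieldType) (s : R) : R := (7%:R + 4%:R * s + s ^+ 2).
Definition g5 (R : fieldType) (s : R) : R := (4%:R + 2%:R * s).
Definition f6 (R : fieldType) (s : R) : R := (16%:R + s + s ^+ 2).
Definition g6 (R : fieldType) (s : R) : R := (1%:R + 2%:R * s).
Definition f7 (R : fieldType) (s : R) : R := (- 7%:R + s).
Definition g7 (R : fieldType) (s : R) : R := 1.
Definition f8 (R : fieldType) (s : R) : R := ((336400%N)%:R + (814088%N)%:R * s + (1021641%N)%:R * s ^+ 2 + (795466%N)%:R * s ^+ 3 + (473805%N)%:R * s ^+ 4 + (202120%N)%:R * s ^+ 5 + (67874%N)%:R * s ^+ 6 + (17148%N)%:R * s ^+ 7 + 3298%:R * s ^+ 8 + 544%:R * s ^+ 9 + 85%:R * s ^+ 10 + 10%:R * s ^+ 11 + s ^+ 12).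
Definition g8 (R : fieldType) (s : R) : R := ((814088%N)%:R + (2043282%N)%:R * s + (2386398%N)%:R * s ^+ 2 + (1895220%N)%:R * s ^+ 3 + (1010600%N)%:R * s ^+ 4 + (407244%N)%:R * s ^+ 5 + (120036%N)%:R * s ^+ 6 + (26384%N)%:R * s ^+ 7 + 4896%:R * s ^+ 8 + 850%:R * s ^+ 9 + 110%:R * s ^+ 10 + 12%:R * s ^+ 11).
Definition f9 (R : fieldType) (s : R) : R := (290%:R + 1218%:R * s + 792%:R * s ^+ 2 + 452%:R * s ^+ 3 + 123%:R * s ^+ 4 + 36%:R * s ^+ 5 + 5%:R * s ^+ 6).
Definition g9 (R : fieldType) (s : R) : R := (1218%:R + 1584%:R * s + 1356%:R * s ^+ 2 + 492%:R * s ^+ 3 + 180%:R * s ^+ 4 + 30%:R * s ^+ 5).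
Definition f10 (R : fieldType) (s : R) : R := ((218660%N)%:R + (337183%N)%:R * s + (351045%N)%:R * s ^+ 2 + (207340%N)%:R * s ^+ 3 + (97247%N)%:R * s ^+ 4 + (34746%N)%:R * s ^+ 5 + (9877%N)%:R * s ^+ 6 + 2852%:R * s ^+ 7 + 633%:R * s ^+ 8 + 119%:R * s ^+ 9 + 10%:R * s ^+ 10).
Definition g10 (R : fieldType) (s : R) : R := ((337183%N)%:R + (702090%N)%:R * s + (622020%N)%:R * s ^+ 2 + (388988%N)%:R * s ^+ 3 + (173730%N)%:R * s ^+ 4 + (59262%N)%:R * s ^+ 5 + (19964%N)%:R * s ^+ 6 + (5064%N)%:R * s ^+ 7 + 1071%:R * s ^+ 8 + 100%:R * s ^+ 9).
Definition f11 (R : fieldType) (s : R) : R := ((136813880%N)%:R + (408096178%N)%:R * s + (787740891%N)%:R * s ^+ 2 + (879206328%N)%:R * s ^+ 3 + (686239869%N)%:R * s ^+ 4 + (418858776%N)%:R * s ^+ 5 + (197182993%N)%:R * s ^+ 6 + (78706274%N)%:R * s ^+ 7 + (25343055%N)%:R * s ^+ 8 + (7284658%N)%:R * s ^+ 9 + (1878341%N)%:R * s ^+ 10 + (475212%N)%:R * s ^+ 11 + (114243%N)%:R * s ^+ 12 + (25380%N)%:R * s ^+ 13 + 3951%:R * s ^+ 14 + 506%:R * s ^+ 15 + 25%:R * s ^+ 16).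
Definition g11 (R : fieldType) (s : R) : R := ((408096178%N)%:R + (1575481782%N)%:R * s + (2637618984%N)%:R * s ^+ 2 + (2744959476%N)%:R * s ^+ 3 + (2094293880%N)%:R * s ^+ 4 + (1183097958%N)%:R * s ^+ 5 + (550943918%N)%:R * s ^+ 6 + (202744440%N)%:R * s ^+ 7 + (65561922%N)%:R * s ^+ 8 + (18783410%N)%:R * s ^+ 9 + (5227332%N)%:R * s ^+ 10 + (1370916%N)%:R * s ^+ 11 + (329940%N)%:R * s ^+ 12 + (55314%N)%:R * s ^+ 13 + (7590%N)%:R * s ^+ 14 + 400%:R * s ^+ 15).
Definition f12 (R : fieldType) (s : R) : R := (s ^+ 9 - 84%:R * s ^+ 6 - 378%:R * s ^+ 5 - 1512%:R * s ^+ 4 - 5208%:R * s ^+ 3 - 7236%:R * s ^+ 2 - 8127%:R * s - 784%:R).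
Definition g12 (R : fieldType) (s : R) : R := (- (8127%N)%:R - (14472%N)%:R * s - (15624%N)%:R * s ^+ 2 - (6048%N)%:R * s ^+ 3 - 1890%:R * s ^+ 4 - 504%:R * s ^+ 5 + 9%:R * s ^+ 8).
Definition f13 (R : fieldType) (s : R) : R := (s ^+ 10 + 5%:R * s ^+ 9 + 24%:R * s ^+ 8 + 20%:R * s ^+ 7 - 266%:R * s ^+ 6 - 2874%:R * s ^+ 5 - 14812%:R * s ^+ 4 - 40316%:R * s ^+ 3 - 85359%:R * s ^+ 2 - 100067%:R * s - 67396%:R).
Definition g13 (R : fieldType) (s : R) : R := (- (100067%N)%:R - (170718%N)%:R * s - (120948%N)%:R * s ^+ 2 - (59248%N)%:R * s ^+ 3 - (14370%N)%:R * s ^+ 4 - 1596%:R * s ^+ 5 + 140%:R * s ^+ 6 + 192%:R * s ^+ 7 + 45%:R * s ^+ 8 + 10%:R * s ^+ 9).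
Definition tden1 (R : fieldType) (s : R) : R := ((21168%N)%:R + (96768%N)%:R * s + (119232%N)%:R * s ^+ 2 + (79488%N)%:R * s ^+ 3 + (43200%N)%:R * s ^+ 4 + (10368%N)%:R * s ^+ 5 + 3024%:R * s ^+ 6).
Definition yden1 (R : fieldType) (s : R) : R := ((464464%N)%:R + (922208%N)%:R * s + (1116192%N)%:R * s ^+ 2 + (852544%N)%:R * s ^+ 3 + (449120%N)%:R * s ^+ 4 + (182112%N)%:R * s ^+ 5 + (46816%N)%:R * s ^+ 6 + (9344%N)%:R * s ^+ 7 + 720%:R * s ^+ 8).
Lemma Df0 (R : fieldType) (D : R -> R) (hD : is_derivation D) (s : R) : D (f0 s) = g0 s * D s.
Proof.
have -> : f0 s = hp [:: (false,0%N); (false,1%N)] s by rewrite /f0; cbv [hp coef fst snd]; ring.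
by rewrite (Dhp hD) /g0; cbv [dhp hp coef fst snd]; ring.
Qed.
Lemma Df1 (R : fieldType) (D : R -> R) (hD : is_derivation D) (s : R) : D (f1 s) = g1 s * D s.
Proof.
have -> : f1 s = hp [:: (false,1%N); (false,1%N)] s by rewrite /f1; cbv [hp coef fst snd]; ring.
by rewrite (Dhp hD) /g1; cbv [dhp hp coef fst snd]; ring.
Qed.
Lemma Df2 (R : fieldType) (D : R -> R) (hD : is_derivation D) (s : R) : D (f2 s) = g2 s * D s.
Proof.
have -> : f2 s = hp [:: (false,7%N); (false,1%N); (false,1%N)] s by rewrite /f2; cbv [hp coef fst snd]; ring.
by rewrite (Dhp hD) /g2; cbv [dhp hp coef fst snd]; ring.
Qed.
Lemma Df3 (R : fieldType) (D : R -> R) (hD : is_derivation D) (s : R) : D (f3 s) = g3 s * D s.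
Proof.
have -> : f3 s = hp [:: (false,2030%N); (false,1827%N); (false,1449%N); (false,854%N); (false,252%N); (false,63%N); (false,5%N)] s by rewrite /f3; cbv [hp coef fst snd]; ring.
by rewrite (Dhp hD) /g3; cbv [dhp hp coef fst snd]; ring.
Qed.
Lemma Df4 (R : fieldType) (D : R -> R) (hD : is_derivation D) (s : R) : D (f4 s) = g4 s * D s.
Proof.
have -> : f4 s = hp [:: (true,1%N); (false,1%N)] s by rewrite /f4; cbv [hp coef fst snd]; ring.
by rewrite (Dhp hD) /g4; cbv [dhp hp coef fst snd]; ring.
Qed.
Lemma Df5 (R : fieldType) (D : R -> R) (hD : is_derivation D) (s : R) : D (f5 s) = g5 s * D s.
Proof.
have -> : f5 s = hp [:: (false,7%N); (false,4%N); (false,1%N)] s by rewrite /f5; cbv [hp coef fst snd]; ring.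
by rewrite (Dhp hD) /g5; cbv [dhp hp coef fst snd]; ring.
Qed.
Lemma Df6 (R : fieldType) (D : R -> R) (hD : is_derivation D) (s : R) : D (f6 s) = g6 s * D s.
Proof.
have -> : f6 s = hp [:: (false,16%N); (false,1%N); (false,1%N)] s by rewrite /f6; cbv [hp coef fst snd]; ring.
by rewrite (Dhp hD) /g6; cbv [dhp hp coef fst snd]; ring.
Qed.
Lemma Df7 (R : fieldType) (D : R -> R) (hD : is_derivation D) (s : R) : D (f7 s) = g7 s * D s.
Proof.
have -> : f7 s = hp [:: (true,7%N); (false,1%N)] s by rewrite /f7; cbv [hp coef fst snd]; ring.
by rewrite (Dhp hD) /g7; cbv [dhp hp coef fst snd]; ring.
Qed.
Lemma Df8 (R : fieldType) (D : R -> R) (hD : is_derivation D) (s : R) : D (f8 s) = g8 s * D s.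
Proof.
have -> : f8 s = hp [:: (false,336400%N); (false,814088%N); (false,1021641%N); (false,795466%N); (false,473805%N); (false,202120%N); (false,67874%N); (false,17148%N); (false,3298%N); (false,544%N); (false,85%N); (false,10%N); (false,1%N)] s by rewrite /f8; cbv [hp coef fst snd]; ring.
by rewrite (Dhp hD) /g8; cbv [dhp hp coef fst snd]; ring.
Qed.
Lemma Df9 (R : fieldType) (D : R -> R) (hD : is_derivation D) (s : R) : D (f9 s) = g9 s * D s.
Proof.
have -> : f9 s = hp [:: (false,290%N); (false,1218%N); (false,792%N); (false,452%N); (false,123%N); (false,36%N); (false,5%N)] s by rewrite /f9; cbv [hp coef fst snd]; ring.
by rewrite (Dhp hD) /g9; cbv [dhp hp coef fst snd]; ring.
Qed.
Lemma Df10 (R : fieldType) (D : R -> R) (hD : is_derivation D) (s : R) : D (f10 s) = g10 s * D s.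
Proof.
have -> : f10 s = hp [:: (false,218660%N); (false,337183%N); (false,351045%N); (false,207340%N); (false,97247%N); (false,34746%N); (false,9877%N); (false,2852%N); (false,633%N); (false,119%N); (false,10%N)] s by rewrite /f10; cbv [hp coef fst snd]; ring.
by rewrite (Dhp hD) /g10; cbv [dhp hp coef fst snd]; ring.
Qed.
Lemma Df11 (R : fieldType) (D : R -> R) (hD : is_derivation D) (s : R) : D (f11 s) = g11 s * D s.
Proof.
have -> : f11 s = hp [:: (false,136813880%N); (false,408096178%N); (false,787740891%N); (false,879206328%N); (false,686239869%N); (false,418858776%N); (false,197182993%N); (false,78706274%N); (false,25343055%N); (false,7284658%N); (false,1878341%N); (false,475212%N); (false,114243%N); (false,25380%N); (false,3951%N); (false,506%N); (false,25%N)] s by rewrite /f11; cbv [hp coef fst snd]; ring.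
by rewrite (Dhp hD) /g11; cbv [dhp hp coef fst snd]; ring.
Qed.
Lemma Df12 (R : fieldType) (D : R -> R) (hD : is_derivation D) (s : R) : D (f12 s) = g12 s * D s.
Proof.
have -> : f12 s = hp [:: (true,784%N); (true,8127%N); (true,7236%N); (true,5208%N); (true,1512%N); (true,378%N); (true,84%N); (false,0%N); (false,0%N); (false,1%N)] s by rewrite /f12; cbv [hp coef fst snd]; ring.
by rewrite (Dhp hD) /g12; cbv [dhp hp coef fst snd]; ring.
Qed.
Lemma Df13 (R : fieldType) (D : R -> R) (hD : is_derivation D) (s : R) : D (f13 s) = g13 s * D s.
Proof.
have -> : f13 s = hp [:: (true,67396%N); (true,100067%N); (true,85359%N); (true,40316%N); (true,14812%N); (true,2874%N); (true,266%N); (false,20%N); (false,24%N); (false,5%N); (false,1%N)] s by rewrite /f13; cbv [hp coef fst snd]; ring.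
by rewrite (Dhp hD) /g13; cbv [dhp hp coef fst snd]; ring.
Qed.
Lemma Dt_den (R : fieldType) (D : R -> R) (hD : is_derivation D) (s : R) : D (t_den s) = tden1 s * D s.
Proof.
have -> : t_den s = hp [:: (false,0%N); (false,21168%N); (false,48384%N); (false,39744%N); (false,19872%N); (false,8640%N); (false,1728%N); (false,432%N)] s by rewrite /t_den; cbv [hp coef fst snd]; ring.
by rewrite (Dhp hD) /tden1; cbv [dhp hp coef fst snd]; ring.
Qed.
Lemma Dy_den (R : fieldType) (D : R -> R) (hD : is_derivation D) (s : R) : D (y_den s) = yden1 s * D s.
Proof.
have -> : y_den s = hp [:: (false,227360%N); (false,464464%N); (false,461104%N); (false,372064%N); (false,213136%N); (false,89824%N); (false,30352%N); (false,6688%N); (false,1168%N); (false,80%N)] s by rewrite /y_den; cbv [hp coef fst snd]; ring.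
by rewrite (Dhp hD) /yden1; cbv [dhp hp coef fst snd]; ring.
Qed.
Definition Etf (R : fieldType) (s : R) : R := ((7%:R / 432%:R)) * (f4 s ^+ 6 * f5 s ^+ 2 * f6 s) / (f0 s * f1 s ^+ 3 * f2 s ^+ 2).
Definition Eyf (R : fieldType) (s : R) : R := ((1%:R / 16%:R)) * (f4 s * f5 s * f11 s) / (f1 s ^+ 2 * f2 s * f3 s ^+ 2).
Definition Wf (R : fieldType) (s : R) : R := ((27%:R / 7%:R)) * (f0 s * f1 s * f2 s * f11 s) / (f3 s ^+ 2 * f4 s ^+ 5 * f5 s * f6 s).
Definition Yaf (R : fieldType) (s : R) : R := ((1%:R / 256%:R)) * (f4 s ^+ 2 * f5 s ^+ 2 * f6 s * f7 s * f8 s) / (f1 s ^+ 2 * f2 s * f3 s ^+ 2).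
Definition Taf (R : fieldType) (s : R) : R := ((1%:R / 2304%:R / 81%:R)) * (f4 s ^+ 7 * f5 s ^+ 3 * f6 s ^+ 2 * f7 s) / (f0 s * f1 s ^+ 4 * f2 s ^+ 3).
Definition df (R : fieldType) (s : R) : R := ((1%:R / 432%:R)) * (f4 s ^+ 2 * f5 s ^+ 2 * f6 s * f7 s * f9 s) / (f0 s * f1 s ^+ 2 * f2 s ^+ 2 * f3 s).
Definition Gf (R : fieldType) (s : R) : R := ((1%:R / 2304%:R / 3%:R)) * (f4 s ^+ 4 * f5 s ^+ 3 * f6 s ^+ 2 * f7 s * f10 s) / (f1 s ^+ 3 * f2 s ^+ 2 * f3 s ^+ 2).
Definition W1f (R : fieldType) (s : R) : R := ((27%:R / 7%:R)) * (f1 s * f2 s * f11 s * g0 s) / (f3 s ^+ 2 * f4 s ^+ 5 * f5 s * f6 s)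
  + ((27%:R / 7%:R)) * (f0 s * f2 s * f11 s * g1 s) / (f3 s ^+ 2 * f4 s ^+ 5 * f5 s * f6 s)
  + ((27%:R / 7%:R)) * (f0 s * f1 s * f11 s * g2 s) / (f3 s ^+ 2 * f4 s ^+ 5 * f5 s * f6 s)
  + (- (54%:R / 7%:R)) * (f0 s * f1 s * f2 s * f11 s * g3 s) / (f3 s ^+ 3 * f4 s ^+ 5 * f5 s * f6 s)
  + (- (135%:R / 7%:R)) * (f0 s * f1 s * f2 s * f11 s * g4 s) / (f3 s ^+ 2 * f4 s ^+ 6 * f5 s * f6 s)
  + (- (27%:R / 7%:R)) * (f0 s * f1 s * f2 s * f11 s * g5 s) / (f3 s ^+ 2 * f4 s ^+ 5 * f5 s ^+ 2 * f6 s)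
  + (- (27%:R / 7%:R)) * (f0 s * f1 s * f2 s * f11 s * g6 s) / (f3 s ^+ 2 * f4 s ^+ 5 * f5 s * f6 s ^+ 2)
  + ((27%:R / 7%:R)) * (f0 s * f1 s * f2 s * g11 s) / (f3 s ^+ 2 * f4 s ^+ 5 * f5 s * f6 s).
Definition PolyTot (R : fieldType) (s : R) : R :=
    (- (11664%N)%:R) * (f0 s ^+ 2 * f1 s ^+ 3 * f2 s ^+ 2 * f9 s * f11 s ^+ 2 * f13 s)
  + ((157464%N)%:R) * (f0 s ^+ 2 * f1 s ^+ 4 * f2 s ^+ 3 * f8 s * f11 s ^+ 2)
  + ((163296%N)%:R) * (f0 s * f1 s ^+ 3 * f2 s ^+ 2 * f3 s * f8 s * f9 s * f11 s * f12 s)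
  + (- (81648%N)%:R) * (f0 s * f1 s ^+ 3 * f2 s ^+ 2 * f3 s ^+ 2 * f4 s ^+ 5 * f5 s * f6 s * f8 s * f11 s)
  + ((3429216%N)%:R) * (f0 s * f1 s ^+ 4 * f2 s ^+ 3 * f4 s ^+ 2 * f5 s ^+ 2 * f6 s * f7 s * f8 s ^+ 2 * f9 s ^+ 2)
  + ((23887872%N)%:R) * (f0 s * f1 s ^+ 5 * f2 s ^+ 3 * f3 s ^+ 2 * f4 s ^+ 2 * f5 s * f6 s * f9 s ^+ 2 * f10 s)
  + ((5196312%N)%:R) * (f0 s * f1 s ^+ 4 * f2 s ^+ 3 * f3 s ^+ 2 * f4 s ^+ 5 * f5 s * f6 s * f8 s ^+ 2)
  + ((23328%N)%:R) * (f0 s * f1 s ^+ 4 * f2 s ^+ 3 * f3 s * f4 s * f5 s * f6 s * f7 s * f8 s * f9 s * f11 s * g0 s)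
  + ((23328%N)%:R) * (f0 s ^+ 2 * f1 s ^+ 3 * f2 s ^+ 3 * f3 s * f4 s * f5 s * f6 s * f7 s * f8 s * f9 s * f11 s * g1 s)
  + ((23328%N)%:R) * (f0 s ^+ 2 * f1 s ^+ 4 * f2 s ^+ 2 * f3 s * f4 s * f5 s * f6 s * f7 s * f8 s * f9 s * f11 s * g2 s)
  + ((23328%N)%:R) * (f0 s ^+ 2 * f1 s ^+ 4 * f2 s ^+ 3 * f3 s * f4 s * f5 s * f6 s * f7 s * f8 s * f9 s * g11 s)
  + (- (46656%N)%:R) * (f0 s ^+ 2 * f1 s ^+ 4 * f2 s ^+ 3 * f4 s * f5 s * f6 s * f7 s * f8 s * f9 s * f11 s * g3 s)
  + (- (116640%N)%:R) * (f0 s ^+ 2 * f1 s ^+ 4 * f2 s ^+ 3 * f3 s * f5 s * f6 s * f7 s * f8 s * f9 s * f11 s * g4 s)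
  + (- (23328%N)%:R) * (f0 s ^+ 2 * f1 s ^+ 4 * f2 s ^+ 3 * f3 s * f4 s * f6 s * f7 s * f8 s * f9 s * f11 s * g5 s)
  + (- (23328%N)%:R) * (f0 s ^+ 2 * f1 s ^+ 4 * f2 s ^+ 3 * f3 s * f4 s * f5 s * f7 s * f8 s * f9 s * f11 s * g6 s).
Definition LCD (R : fieldType) (s : R) : R := f3 s ^+ 3 * f4 s ^+ 12 * f5 s ^+ 4 * f6 s ^+ 3 * f7 s * f8 s * f9 s.

Lemma nzn (R : fieldType) (hc : [pchar R] =i pred0) n : n.+1%:R != 0 :> R.
Proof. by move/pcharf0P: hc => ->. Qed.
Ltac side hc := repeat (apply/andP; split); rewrite ?oppr_eq0 ?(nzn hc) //.
Definition cc (R : fieldType) (s : R) : R := s * (s ^+ 2 + s + 7%:R).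
Definition c1 (R : fieldType) (s : R) : R := 3%:R * s ^+ 2 + 2%:R * s + 7%:R.
Definition Af (R : fieldType) (s : R) : R := f12 s / (432%:R * f0 s * f1 s ^+ 2 * f2 s ^+ 2).
Definition Bf (R : fieldType) (s : R) : R := f13 s / (16%:R * f1 s * f2 s * f3 s).
Definition EtUc (R : fieldType) (s : R) : R :=
  ((2%:R * g12 s * cc s + f12 s * c1 s) * t_den s - 2%:R * f12 s * cc s * tden1 s) / t_den s ^+ 2.
Definition EyUc (R : fieldType) (s : R) : R :=
  ((2%:R * g13 s * cc s + f13 s * c1 s) * y_den s - 2%:R * f13 s * cc s * yden1 s) / y_den s ^+ 2.
Section Exp.
Set Default Proof Using "All".
Variables (R : fieldType) (s : R).
Hypothesis hc : [pchar R] =i pred0.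
Hypotheses (h0 : s != 0) (h1 : s + 1 != 0) (h2 : s ^+ 2 + s + 7%:R != 0)
  (h3 : 5%:R * s ^+ 6 + 63%:R * s ^+ 5 + 252%:R * s ^+ 4 + 854%:R * s ^+ 3 + 1449%:R * s ^+ 2 + 1827%:R * s + 2030%:R != 0).
Lemma EtE : EtUc s = Etf s.
Proof. rewrite /EtUc /Etf /cc /c1 /t_den /tden1 /f0 /g0 /f1 /g1 /f2 /g2 /f3 /g3 /f4 /g4 /f5 /g5 /f6 /g6 /f7 /g7 /f8 /g8 /f9 /g9 /f10 /g10 /f11 /g11 /f12 /g12 /f13 /g13; field; side hc. Qed.
Lemma EyE : EyUc s = Eyf s.
Proof. rewrite /EyUc /Eyf /cc /c1 /y_den /yden1 /f0 /g0 /f1 /g1 /f2 /g2 /f3 /g3 /f4 /g4 /f5 /g5 /f6 /g6 /f7 /g7 /f8 /g8 /f9 /g9 /f10 /g10 /f11 /g11 /f12 /g12 /f13 /g13; field; side hc. Qed.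
Lemma YaE : Bf s * Bf s * cc s - 1 / 4%:R = Yaf s.
Proof. rewrite /Bf /Yaf /cc /f0 /g0 /f1 /g1 /f2 /g2 /f3 /g3 /f4 /g4 /f5 /g5 /f6 /g6 /f7 /g7 /f8 /g8 /f9 /g9 /f10 /g10 /f11 /g11 /f12 /g12 /f13 /g13; field; side hc. Qed.
Lemma TaE : Af s * Af s * cc s - 1 / 4%:R = Taf s.
Proof. rewrite /Af /Taf /cc /f0 /g0 /f1 /g1 /f2 /g2 /f3 /g3 /f4 /g4 /f5 /g5 /f6 /g6 /f7 /g7 /f8 /g8 /f9 /g9 /f10 /g10 /f11 /g11 /f12 /g12 /f13 /g13; field; side hc. Qed.
Lemma dE : Af s - Bf s = df s.
Proof. rewrite /Af /Bf /df /f0 /g0 /f1 /g1 /f2 /g2 /f3 /g3 /f4 /g4 /f5 /g5 /f6 /g6 /f7 /g7 /f8 /g8 /f9 /g9 /f10 /g10 /f11 /g11 /f12 /g12 /f13 /g13; field; side hc. Qed.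
Lemma GE : 2%:R * Af s * Bf s * cc s - Bf s * Bf s * cc s - 1 / 4%:R = Gf s.
Proof. rewrite /Af /Bf /Gf /cc /f0 /g0 /f1 /g1 /f2 /g2 /f3 /g3 /f4 /g4 /f5 /g5 /f6 /g6 /f7 /g7 /f8 /g8 /f9 /g9 /f10 /g10 /f11 /g11 /f12 /g12 /f13 /g13; field; side hc. Qed.
Lemma tE u : t_of s u = 1 / 2%:R - Af s * u.
Proof. rewrite /t_of /Af /f0 /g0 /f1 /g1 /f2 /g2 /f3 /g3 /f4 /g4 /f5 /g5 /f6 /g6 /f7 /g7 /f8 /g8 /f9 /g9 /f10 /g10 /f11 /g11 /f12 /g12 /f13 /g13; field; side hc. Qed.
Lemma yE u : y_of s u = 1 / 2%:R - Bf s * u.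
Proof. rewrite /y_of /Bf /f0 /g0 /f1 /g1 /f2 /g2 /f3 /g3 /f4 /g4 /f5 /g5 /f6 /g6 /f7 /g7 /f8 /g8 /f9 /g9 /f10 /g10 /f11 /g11 /f12 /g12 /f13 /g13; field; side hc. Qed.
Lemma PolyE : PolyTot s = 0.
Proof. rewrite /PolyTot /f0 /g0 /f1 /g1 /f2 /g2 /f3 /g3 /f4 /g4 /f5 /g5 /f6 /g6 /f7 /g7 /f8 /g8 /f9 /g9 /f10 /g10 /f11 /g11 /f12 /g12 /f13 /g13. ring. Qed.
End Exp.


Definition Rc (R : fieldType) (A B U W : R) : R :=
  1 / 2%:R * W ^+ 2 * (- 2%:R * B / (B * B * U - 1 / 4%:R) + 1 / ((A - B) * U))
  - W * (- 2%:R * A / (A * A * U - 1 / 4%:R) + 1 / ((A - B) * U))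
  + (B * B * U - 1 / 4%:R) * (A - B) / (A * A * U - 1 / 4%:R) ^+ 2 *
    (2%:R / 9%:R + 8%:R / 49%:R * (2%:R * A * B * U - B * B * U - 1 / 4%:R) / (B * B * U - 1 / 4%:R) ^+ 2
     + 33%:R / 98%:R * (A * A * U - 1 / 4%:R) / ((A - B) ^+ 2 * U)).

Lemma nz_of (R : fieldType) (x y k : R) : k != 0 -> y != 0 -> x = k * y -> x != 0.
Proof. by move=> hk hy ->; rewrite mulf_neq0. Qed.

Lemma rhsE (R : fieldType) (hc : [pchar R] =i pred0) (A B W u : R) :
  u != 0 ->
  1 / 2%:R - A * u != 0 -> 1 / 2%:R - A * u != 1 ->
  1 / 2%:R - B * u != 0 -> 1 / 2%:R - B * u != 1 ->
  1 / 2%:R - B * u != 1 / 2%:R - A * u ->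
  PVI_rhs (4%:R / 7%:R) (4%:R / 7%:R) (4%:R / 7%:R) (1 / 3%:R)
    (1 / 2%:R - A * u) (1 / 2%:R - B * u) W = u * Rc A B (u ^+ 2) W.
Proof.
move=> hu ht0 ht1 hy0 hy1 hyt.
rewrite /PVI_rhs /PVI_alpha /PVI_beta /PVI_gamma /PVI_delta /Rc.
have hy1' : 1 / 2%:R - B * u - 1 != 0 by rewrite subr_eq0.
have ht1' : 1 / 2%:R - A * u - 1 != 0 by rewrite subr_eq0.
have hyt' : (1 / 2%:R - B * u) - (1 / 2%:R - A * u) != 0 by rewrite subr_eq0.
have hYa := mulf_neq0 hy0 hy1'.
have hTa := mulf_neq0 ht0 ht1'.
have hui : u^-1 != 0 by rewrite invr_eq0.
have h2 : 2%:R != 0 :> R by exact: (nzn hc _).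
have h4 : 4%:R != 0 :> R by exact: (nzn hc _).
have h4' : - 4%:R != 0 :> R by rewrite oppr_eq0.
field.
repeat (apply/andP; split).
all: first [ done | exact: (nzn hc _)
  | (apply: (nz_of h2 hy0); field; rewrite ?h2 //)
  | (apply: (nz_of h2 hy1'); field; rewrite ?h2 //)
  | (apply: (nz_of h2 hyt'); field; rewrite ?h2 //)
  | (apply: (nz_of h2 ht0); field; rewrite ?h2 //)
  | (apply: (nz_of h2 ht1'); field; rewrite ?h2 //)
  | (apply: (nz_of h4 hYa); field; rewrite ?h2 //)
  | (apply: (nz_of h4 hTa); field; rewrite ?h2 //)
  | (apply: (nz_of h4' hYa); field; rewrite ?h2 //)
  | (apply: (nz_of h4' hTa); field; rewrite ?h2 //)
  | (apply: (nz_of hui hyt'); field; rewrite ?hu ?h2 //) ].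
Qed.


Lemma by_zero (R : fieldType) (x y p q : R) : x - y = p * q -> p = 0 -> x = y.
Proof. by move=> e hp; apply/eqP; rewrite -subr_eq0 e hp mul0r. Qed.

Section Main.
Set Default Proof Using "All".
Variables (R : fieldType) (D : R -> R) (s u : R).
Hypotheses (hc : [pchar R] =i pred0) (hD : is_derivation D).

Lemma Dhalf : D (1 / 2%:R) = 0.
Proof. rewrite (Ddiv hD) ?(nzn hc _) // (D1 hD) (Dnat hD) mul0r mulr0 subrr mul0r //. Qed.

Lemma Dratc n m : D (n%:R / m.+1%:R) = 0.
Proof. rewrite (Ddiv hD) ?(nzn hc _) // !(Dnat hD) mul0r mulr0 subrr mul0r //. Qed.

Lemma DWf : f3 s != 0 -> f4 s != 0 -> f5 s != 0 -> f6 s != 0 -> D (Wf s) = W1f s * D s.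
Proof.
move=> h3 h4 h5 h6.
have h7 : 7%:R != 0 :> R by exact: (nzn hc _).
have hY : f3 s ^+ 2 * f4 s ^+ 5 * f5 s * f6 s != 0 by rewrite !mulf_neq0 ?expf_neq0.
rewrite /Wf (Ddiv hD) // (DM hD (27%:R / 7%:R)) Dratc.
rewrite (DM hD (f0 s * f1 s * f2 s)) (Df11 hD s) (DM hD) (DM hD) (DM hD).
rewrite (_ : D (f0 s) = D s) // (Df1 hD s) (Df2 hD s) (Df6 hD s).
rewrite (DM hD (f3 s ^+ 2 * f4 s ^+ 5)) (DM hD (f3 s ^+ 2)) (Df5 hD s).
rewrite (DXS hD (f3 s)) (DXS hD (f4 s)) (Df3 hD s) (Df4 hD s).
rewrite /W1f (_ : g0 s = 1) //.
field; side hc.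
Qed.
End Main.

Unset Implicit Arguments.

Theorem mainTheorem15 (R : fieldType) (D : R -> R) (s u : R) :
  [pchar R] =i pred0 ->
  is_derivation D ->
  u ^+ 2 = s * (s ^+ 2 + s + 7%:R) ->
  D s != 0 ->
  t_den s != 0 -> y_den s != 0 ->
  D (t_of s u) != 0 ->
  t_of s u != 0 -> t_of s u != 1 ->
  y_of s u != 0 -> y_of s u != 1 -> y_of s u != t_of s u ->
  solves_PVI D (4%:R / 7%:R) (4%:R / 7%:R) (4%:R / 7%:R) (1 / 3%:R)
    (t_of s u) (y_of s u).
Proof.
move=> hc hD hu hds htd hyd hDt ht0 ht1 hy0 hy1 hyt.
have h0 : f0 s != 0.
  apply: contraNneq htd => h.
  have E : t_den s = f0 s * (432%:R * f1 s ^+ 2 * f2 s ^+ 2) by rewrite /t_den /f0 /f1 /f2; ring.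
  by rewrite E h mul0r.
have h1 : f1 s != 0.
  apply: contraNneq htd => h.
  have E : t_den s = f1 s * (432%:R * f0 s * f1 s * f2 s ^+ 2) by rewrite /t_den /f0 /f1 /f2; ring.
  by rewrite E h mul0r.
have h2 : f2 s != 0.
  apply: contraNneq htd => h.
  have E : t_den s = f2 s * (432%:R * f0 s * f1 s ^+ 2 * f2 s) by rewrite /t_den /f0 /f1 /f2; ring.
  by rewrite E h mul0r.
have h3 : f3 s != 0.
  apply: contraNneq hyd => h.
  have E : y_den s = f3 s * (16%:R * f1 s * f2 s) by rewrite /y_den /f3 /f1 /f2; ring.
  by rewrite E h mul0r.
have hu0 : u != 0.
  apply/eqP => e; move: hu; rewrite e expr2 mul0r => /esym/eqP; rewrite mulf_eq0 => /orP[] /eqP h.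
  - by rewrite /f0 h eqxx in h0.
  - by rewrite /f2 h eqxx in h2.
have h2u : 2%:R * u != 0 by rewrite mulf_neq0 ?(nzn hc _).
have hDu : D u = c1 s * D s / (2%:R * u).
  have e := congr1 D hu.
  rewrite (DXS hD u) (DM hD s) (Dadd hD (s ^+ 2 + s)) (Dadd hD (s ^+ 2)) (DXS hD s) (Dnat hD) !expr1 in e.
  have e' : 2%:R * u * D u = c1 s * D s by rewrite e /c1; ring.
  by rewrite -e'; field; side hc.
have hcu : cc s = u ^+ 2 by rewrite /cc hu.
have hDt' : D (t_of s u) = - D s * Etf s / (2%:R * u).
  rewrite -(EtE hc h0 h1 h2 h3) (tE hc h0 h1 h2 h3 u) (_ : Af s = f12 s / t_den s) //.
  rewrite (DB hD) (Dhalf s u hc hD) (DM hD (f12 s / t_den s)) (Ddiv hD) // (Df12 hD) (Dt_den hD) hDu.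
  rewrite /EtUc hcu.
  by field; side hc.
have hDy' : D (y_of s u) = - D s * Eyf s / (2%:R * u).
  rewrite -(EyE hc h0 h1 h2 h3) (yE hc h0 h1 h2 h3 u) (_ : Bf s = f13 s / y_den s) //.
  rewrite (DB hD) (Dhalf s u hc hD) (DM hD (f13 s / y_den s)) (Ddiv hD) // (Df13 hD) (Dy_den hD) hDu.
  rewrite /EyUc hcu.
  by field; side hc.
have hf4 : f4 s != 0.
  by apply: contraNneq hDt => h; rewrite hDt' /Etf h; apply/eqP; field; side hc.
have hf5 : f5 s != 0.
  by apply: contraNneq hDt => h; rewrite hDt' /Etf h; apply/eqP; field; side hc.
have hf6 : f6 s != 0.
  by apply: contraNneq hDt => h; rewrite hDt' /Etf h; apply/eqP; field; side hc.
have hy1e : D (y_of s u) / D (t_of s u) = Wf s.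
  by rewrite hDy' hDt' /Eyf /Etf /Wf; field; side hc.
have hYa : Yaf s != 0.
  rewrite -(YaE hc h0 h1 h2 h3) hcu.
  rewrite (_ : Bf s * Bf s * u ^+ 2 - 1 / 4%:R = y_of s u * (y_of s u - 1)); last first.
    by rewrite (yE hc h0 h1 h2 h3 u); field; side hc.
  by rewrite mulf_neq0 // subr_eq0.
have hTa : Taf s != 0.
  rewrite -(TaE hc h0 h1 h2 h3) hcu.
  rewrite (_ : Af s * Af s * u ^+ 2 - 1 / 4%:R = t_of s u * (t_of s u - 1)); last first.
    by rewrite (tE hc h0 h1 h2 h3 u); field; side hc.
  by rewrite mulf_neq0 // subr_eq0.
have hd : df s != 0.
  rewrite -(dE hc h0 h1 h2 h3); apply: contraNneq hyt => e.
  move/eqP: e; rewrite subr_eq0 => /eqP e.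
  by rewrite (yE hc h0 h1 h2 h3 u) (tE hc h0 h1 h2 h3 u) e eqxx.
have hf7 : f7 s != 0.
  by apply: contraNneq hd => h; rewrite /df h; apply/eqP; field; side hc.
have hf9 : f9 s != 0.
  by apply: contraNneq hd => h; rewrite /df h; apply/eqP; field; side hc.
have hf8 : f8 s != 0.
  by apply: contraNneq hYa => h; rewrite /Yaf h; apply/eqP; field; side hc.
rewrite /solves_PVI; cbv zeta.
rewrite hy1e (DWf u hc hD h3 hf4 hf5 hf6) hDt'.
rewrite (tE hc h0 h1 h2 h3 u) in ht0 ht1 hyt *.
rewrite (yE hc h0 h1 h2 h3 u) in hy0 hy1 hyt *.
rewrite (rhsE hc (Wf s) hu0 ht0 ht1 hy0 hy1 hyt) -hcu.
rewrite /Rc (GE hc h0 h1 h2 h3) (YaE hc h0 h1 h2 h3) (TaE hc h0 h1 h2 h3) (dE hc h0 h1 h2 h3).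
rewrite (_ : cc s = f0 s * f2 s) // /Af /Bf.
apply: (@by_zero _ _ _ (PolyTot s) (- u / (49%:R * LCD s))); last exact: (PolyE hc h0 h1 h2 h3).
rewrite /Wf /W1f /Etf /Yaf /Taf /df /Gf /PolyTot /LCD.
field.
side hc.
Qed.
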